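(* Let $n_b\ge 1$, $d_l\ge 4$, $L\ge 4$, $M\ge 1$ be integers, and let $H$ be a quasi-cyclic SC-LDPC parity-check matrix with parameters $(n_b,d_l,L,M)$ and reuse $T=2$ (as defined in the context). Then, for every choice of the shift values $p_{x,y}$ satisfying the reuse-$2$ condition, the Tanner graph of $H$ contains a cycle of length at most $8$; in particular its girth is at most $8$.
   Context: Quasi-cyclic SC-LDPC matrix: fix integers $n_b\ge1$ (bit nodes per protograph; one check node per protograph), $d_l\ge 2$, $L\ge1$, $M\ge1$. $H$ is a binary block matrix with $L+d_l-1$ block rows (indexed $x=1,\dots,L+d_l-1$) and $n_bL$ block columns (indexed $y=1,\dots,n_bL$), each block of size $M\times M$. For a block column $y$ put $t(y)=\lceil y/n_b\rceil$. Block $(x,y)$ is the all-zero matrix unless $t(y)\le x\le t(y)+d_l-1$, in which case it equals the circulant permutation matrix $I_{(p_{x,y})}$ for a shift value $p_{x,y}\in\{0,\dots,M-1\}$; here $I_{(p)}$ is the $M\times M$ matrix whose row $r$ ($0\le r\le M-1$) has a single $1$, in column $(r+p)\bmod M$, and zeros elsewhere. Reuse-$T$ condition (periodic time-variant construction with period $T$): $p_{x+T,\,y+Tn_b}=p_{x,y}$ whenever both $(x,y)$ and $(x+T,y+Tn_b)$ are nonzero blocks of $H$; otherwise the shift values are arbitrary. The Tanner graph of $H$ is the bipartite graph with one bit node per column and one check node per row of $H$, a bit node and check node being adjacent iff the corresponding entry of $H$ is $1$. The girth is the length of a shortest cycle in the Tanner graph. *)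

(* Defs.v *)
From mathcomp Require Import all_boot.
Set Implicit Arguments. Unset Strict Implicit. Unset Printing Implicit Defensive.

(* Block rows x = 1..L+dl-1, block columns y = 1..nb*L (1-indexed as in the paper).
   A check node is a pair (x, r) : block row x, row r < M inside the block.
   A bit node is a pair (y, c) : block column y, column c < M inside the block. *)

Definition tcol (nb y : nat) : nat := (y + nb - 1) %/ nb.

(* block (x,y) is a nonzero block (a circulant permutation matrix) *)
Definition nzblock (nb dl L : nat) (x y : nat) : bool :=
  [&& 1 <= x, x <= L + dl - 1, 1 <= y, y <= nb * L,
      tcol nb y <= x & x <= tcol nb y + dl - 1].

Definition shifts_ok (nb dl L M : nat) (p : nat -> nat -> nat) : Prop :=
  forall x y, nzblock nb dl L x y -> p x y < M.

Definition reuse (T nb dl L : nat) (p : nat -> nat -> nat) : Prop :=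
  forall x y, nzblock nb dl L x y -> nzblock nb dl L (x + T) (y + T * nb) ->
    p (x + T) (y + T * nb) = p x y.

Definition check_node (dl L M : nat) (v : nat * nat) : bool :=
  [&& 1 <= v.1, v.1 <= L + dl - 1 & v.2 < M].
Definition bit_node (nb L M : nat) (w : nat * nat) : bool :=
  [&& 1 <= w.1, w.1 <= nb * L & w.2 < M].

(* Entry of H in row r of block row x, column c of block column y is 1:
   block (x,y) is I_(p x y), whose row r has its 1 in column (r + p) mod M. *)
Definition adj (nb dl L M : nat) (p : nat -> nat -> nat)
    (v : nat * nat) (w : nat * nat) : bool :=
  [&& check_node dl L M v, bit_node nb L M w, nzblock nb dl L v.1 w.1
    & w.2 == (v.2 + p v.1 w.1) %% M].

Definition tanner_cycle (nb dl L M : nat) (p : nat -> nat -> nat)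
    (cs bs : seq (nat * nat)) : Prop :=
  let k := size cs in
  [/\ 2 <= k, size bs = k, uniq cs, uniq bs &
      forall i, i < k ->
        adj nb dl L M p (nth (0,0) cs i) (nth (0,0) bs i) /\
        adj nb dl L M p (nth (0,0) cs ((i + 1) %% k)) (nth (0,0) bs i)].

Definition cycle_length (cs : seq (nat * nat)) : nat := 2 * size cs.

(* Main.v *)
Require Import Defs.
From mathcomp Require Import all_boot zify.

Lemma tcolk nb k : 0 < nb -> tcol nb (1 + k * nb) = k.+1.
Proof.
move=> hnb; rewrite /tcol.
have -> : 1 + k * nb + nb - 1 = k.+1 * nb by rewrite mulSn; lia.
by rewrite mulnK.
Qed.

Lemma nzI nb dl L k x : 0 < nb -> k < L -> k < x -> x <= k + dl ->
  x <= L + dl - 1 -> nzblock nb dl L x (1 + k * nb).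
Proof.
move=> hnb hk h1 h2 h3; rewrite /nzblock tcolk //.
have : k.+1 * nb <= L * nb by rewrite leq_mul2r hk orbT.
rewrite mulSn => hh.
apply/and5P; split; try lia.

Qed.

Lemma adjI nb dl L M p x r y c :
  0 < x -> x <= L + dl - 1 -> r < M -> nzblock nb dl L x y ->
  c = (r + p x y) %% M ->
  adj nb dl L M p (x, r) (y, c).
Proof.
move=> h1 h2 h3 hn hc; rewrite /adj /check_node /bit_node /=.
move: (hn); rewrite /nzblock => /and5P [_ _ y1 y2 _].
have hM : 0 < M by lia.
apply/and4P; split => //.
- by rewrite h1 h2 h3.
- by rewrite y1 y2 hc ltn_pmod.
- by rewrite hc.
Qed.

Lemma ydist nb : 0 < nb ->
  let y1 := 1 + 0 * nb in let y2 := 1 + 1 * nb in let y3 := 1 + 2 * nb in let y4 := 1 + 3 * nb in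
  y1 != y4 /\ y1 != y3 /\ y1 != y2 /\ y4 != y3 /\ y4 != y2 /\ y3 != y2.
Proof. move=> h /=; split; [lia|split; [lia|split; [lia|split; [lia|split; lia]]]]. Qed.

Lemma arithC M q2 q4 s2 s4 : q4 < M -> s4 < M ->
  q2 + (M - q4) + (s2 + (M - s4 + q4)) = s2 + (M - s4 + q2) + M.
Proof. lia. Qed.

Theorem lemma2 (nb dl L M : nat) (p : nat -> nat -> nat) :
  1 <= nb -> 4 <= dl -> 4 <= L -> 1 <= M ->
  shifts_ok nb dl L M p -> reuse 2 nb dl L p ->
  exists cs bs : seq (nat * nat),
    tanner_cycle nb dl L M p cs bs /\ cycle_length cs <= 8.
Proof.
move=> hnb hdl hL hM hok hr.
have hx4 : 4 <= L + dl - 1 by lia.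
have hx6 : 6 <= L + dl - 1 by lia.
have hx2 : 2 <= L + dl - 1 by lia.
set y1 := 1 + 0 * nb; set y2 := 1 + 1 * nb; set y3 := 1 + 2 * nb; set y4 := 1 + 3 * nb.
have N21 : nzblock nb dl L 2 y1 by apply: nzI; lia.
have N41 : nzblock nb dl L 4 y1 by apply: nzI; lia.
have N22 : nzblock nb dl L 2 y2 by apply: nzI; lia.
have N42 : nzblock nb dl L 4 y2 by apply: nzI; lia.
have N43 : nzblock nb dl L 4 y3 by apply: nzI; lia.
have N63 : nzblock nb dl L 6 y3 by apply: nzI; lia.
have N44 : nzblock nb dl L 4 y4 by apply: nzI; lia.
have N64 : nzblock nb dl L 6 y4 by apply: nzI; lia.
have E13 : y1 + 2 * nb = y3 by rewrite /y1 /y3; lia.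
have E24 : y2 + 2 * nb = y4 by rewrite /y2 /y4; lia.
have e43 : p 4 y3 = p 2 y1 by have := hr 2 y1 N21; rewrite E13; apply.
have e63 : p 6 y3 = p 4 y1 by have := hr 4 y1 N41; rewrite E13; apply.
have e44 : p 4 y4 = p 2 y2 by have := hr 2 y2 N22; rewrite E24; apply.
have e64 : p 6 y4 = p 4 y2 by have := hr 4 y2 N42; rewrite E24; apply.
set q2 := p 2 y1; set q4 := p 4 y1; set s2 := p 2 y2; set s4 := p 4 y2.
have hq4 : q4 < M by apply: hok.
have hs4 : s4 < M by apply: hok.
have hM0 : 0 < M by lia.
set r1 := (q2 + (M - q4)) %% M.
set r2 := (r1 + s2 + (M - s4)) %% M.
set r3 := (s2 + (M - s4)) %% M.
have hr1 : r1 < M by rewrite ltn_pmod.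
have hr2 : r2 < M by rewrite ltn_pmod.
have hr3 : r3 < M by rewrite ltn_pmod.
have A : (0 + q2) %% M = (r1 + q4) %% M.
  by rewrite /r1 modnDml -addnA subnK ?(ltnW hq4) // modnDr add0n.
have B : (r1 + s2) %% M = (r2 + s4) %% M.
  by rewrite /r2 modnDml -addnA subnK ?(ltnW hs4) // modnDr.
have C : (r2 + q4) %% M = (r3 + q2) %% M.
  rewrite /r2 /r3 /r1 modnDml [in RHS]modnDml -!addnA modnDml.
  rewrite arithC //.
  by rewrite modnDr.
have D : (r3 + s4) %% M = (0 + s2) %% M.
  by rewrite /r3 modnDml -addnA subnK ?(ltnW hs4) // modnDr add0n.
have hy : y1 != y4 /\ y1 != y3 /\ y1 != y2 /\ y4 != y3 /\ y4 != y2 /\ y3 != y2.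
  exact: ydist.
case: (eqVneq r1 r3) => hne.
- exists [:: (4, r1); (6, r2)], [:: (y4, (r1 + s2) %% M); (y3, (r2 + q4) %% M)].
  split; last by [].
  split => //=.
  + by rewrite inE xpair_eqE negb_and andbT; case: hy => _ [_ [_ [-> _]]].
  + case => [|[|i]] //= _.
    * split; apply: adjI; rewrite ?e44 ?e64 ?e63 ?e43; first [done | exact: A | exact: B | exact: C | exact: D | by rewrite hne C].
    * split; apply: adjI; rewrite ?e44 ?e64 ?e63 ?e43; first [done | exact: A | exact: B | exact: C | exact: D | by rewrite hne C].
- exists [:: (2, 0); (4, r1); (6, r2); (4, r3)],
    [:: (y1, (0 + q2) %% M); (y4, (r1 + s2) %% M); (y3, (r2 + q4) %% M); (y2, (r3 + s4) %% M)].
  split; last by [].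
  split => //=.
  + by rewrite !inE !xpair_eqE /= hne.
  + rewrite !inE !xpair_eqE; case: hy => [h1 [h2 [h3 [h4 [h5 h6]]]]].
    by rewrite (negbTE h1) (negbTE h2) (negbTE h3) (negbTE h4) (negbTE h5) (negbTE h6).
  + case => [|[|[|[|i]]]] //= _.
    * split; apply: adjI; rewrite ?e44 ?e64 ?e63 ?e43; first [done | exact: A | exact: B | exact: C | exact: D | by rewrite hne C].
    * split; apply: adjI; rewrite ?e44 ?e64 ?e63 ?e43; first [done | exact: A | exact: B | exact: C | exact: D | by rewrite hne C].
    * split; apply: adjI; rewrite ?e44 ?e64 ?e63 ?e43; first [done | exact: A | exact: B | exact: C | exact: D | by rewrite hne C].
    * split; apply: adjI; rewrite ?e44 ?e64 ?e63 ?e43; first [done | exact: A | exact: B | exact: C | exact: D | by rewrite hne C].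
Qed.
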